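(* Consider a finite MDP with states $\mathcal{X}=\{1,\dots,n\}$, finite action set $\mathcal{A}$, costs $c(i,a)$, discount factor $\vartheta\in(0,1)$, a policy $\pi:\mathcal{X}\to\mathcal{A}$, uncertainty sets $\mathcal{P}^a_i$ and proxy uncertainty sets $\widehat{\mathcal{P}^a_i}$, an exploration transition matrix $P^{\widehat{\pi}}$ with stationary distribution $\xi$, and a feature matrix $\Phi\in\mathbb{R}^{n\times d}$, all as in the context. Suppose there is $\alpha\in(0,1)$ such that $\vartheta p_j\le\alpha P^{\widehat{\pi}}_{ij}$ for all $i,j\in\mathcal{X}$, $a\in\mathcal{A}$ and $p\in\mathcal{P}^a_i$. Let $\beta^a_i:=\max_{y\in\widehat{U^a_i}}\min_{x\in U^a_i}\|y-x\|_\xi/\xi_{\min}$ and $\beta:=\max_{i\in\mathcal{X}}\beta^{\pi(i)}_i$. If $\alpha^2+\vartheta^2\beta^2<\tfrac12$, then for all $\theta,\theta'\in\mathbb{R}^d$, \[ \|\widehat{T}_\pi(\Phi\theta)-\widehat{T}_\pi(\Phi\theta')\|_\xi^2\le 2(\alpha^2+\vartheta^2\beta^2)\|\Phi\theta-\Phi\theta'\|_\xi^2, \] which is $<\|\Phi\theta-\Phi\theta'\|_\xi^2$ whenever $\Phi\theta\neq\Phi\theta'$. If moreover $\beta^{\pi(i)}_i=0$ for all $i$ (so $\widehat{U^{\pi(i)}_i}=U^{\pi(i)}_i$), then for all $\theta,\theta'\in\mathbb{R}^d$, $\|\widehat{T}_\pi(\Phi\theta)-\widehat{T}_\pi(\P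hi\theta')\|_\xi\le\alpha\|\Phi\theta-\Phi\theta'\|_\xi$.
   Context: For each $i\in\mathcal{X},a\in\mathcal{A}$: $p^a_i\in\Delta_n$ is the (unknown) nominal transition probability vector; $U^a_i\subseteq\mathbb{R}^n$ is a nonempty compact confidence region with $\mathcal{P}^a_i:=\{p^a_i+x\mid x\in U^a_i\}\subseteq\Delta_n$; $\widehat{U^a_i}\supseteq U^a_i$ is a nonempty compact proxy region and $\widehat{\mathcal{P}^a_i}:=\{p^a_i+y\mid y\in\widehat{U^a_i}\}$. $\sigma_S(v):=\sup_{s\in S}s^\top v$. The proxy robust Bellman operator is $(\widehat{T}_\pi v)(i):=c(i,\pi(i))+\vartheta\,\sigma_{\widehat{\mathcal{P}^{\pi(i)}_i}}(v)$ for $v\in\mathbb{R}^n$. $P^{\widehat{\pi}}$ is the $n\times n$ transition probability matrix of the exploration policy used to generate samples, $\xi$ is its steady-state distribution, assumed to have all entries positive, $\xi_{\min}:=\min_i\xi_i$, and $\|x\|_\xi:=(\sum_i\xi_ix_i^2)^{1/2}$. *)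

(* Defs.v *)
From HB Require Import structures.
From mathcomp Require Import all_boot all_order all_algebra.
From mathcomp Require Import all_classical all_reals all_analysis.
Set Implicit Arguments. Unset Strict Implicit. Unset Printing Implicit Defensive.
Import Order.TTheory GRing.Theory Num.Theory.
Import numFieldNormedType.Exports.
Local Open Scope classical_set_scope.
Local Open Scope ring_scope.

Section Defs.
Variables (R : realType) (n : nat).
Local Notation vec := 'cV[R]_n.

Definition simplex : set vec :=
  [set x | (forall i, 0 <= x i 0) /\ \sum_i x i 0 = 1].

Definition dotv (s v : vec) : R := \sum_i s i 0 * v i 0.

Definition supp_fun (S : set vec) (v : vec) : R := sup [set dotv s v | s in S].

Definition xinorm (xi : vec) (x : vec) : R := Num.sqrt (\sum_i xi i 0 * (x i 0) ^+ 2).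

Definition ximin (xi : vec) : R := inf [set xi i 0 | i in [set: 'I_n]].

Definition stochastic (P : 'M[R]_n) : Prop :=
  (forall i j, 0 <= P i j) /\ (forall i, \sum_j P i j = 1).

Definition stationary (P : 'M[R]_n) (xi : vec) : Prop :=
  simplex xi /\ (forall j, \sum_i xi i 0 * P i j = xi j 0).

Variable A : finType.

Definition proxy_set (p : 'I_n -> A -> vec) (Uhat : 'I_n -> A -> set vec)
  (i : 'I_n) (a : A) : set vec := [set p i a + y | y in Uhat i a].

Definition proxy_bellman (c : 'I_n -> A -> R) (vt : R) (pi : 'I_n -> A)
  (p : 'I_n -> A -> vec) (Uhat : 'I_n -> A -> set vec) (v : vec) : vec :=
  \col_i (c i (pi i) + vt * supp_fun (proxy_set p Uhat i (pi i)) v).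

Definition beta_ia (xi : vec) (U Uhat : 'I_n -> A -> set vec) (i : 'I_n) (a : A) : R :=
  sup [set inf [set xinorm xi (y - x) | x in U i a] | y in Uhat i a] / ximin xi.

(* beta = max_i beta^{pi(i)}_i  (all beta^a_i are >= 0) *)
Definition beta (xi : vec) (U Uhat : 'I_n -> A -> set vec) (pi : 'I_n -> A) : R :=
  \big[Num.max/0]_i beta_ia xi U Uhat i (pi i).

End Defs.
Arguments simplex {R n} _.
Arguments supp_fun {R n} _ _.

(* Main.v *)
Require Import Defs.
From HB Require Import structures.
From mathcomp Require Import all_boot all_order all_algebra.
From mathcomp Require Import all_classical all_reals all_analysis.
From mathcomp Require Import ring lra.
Import Order.TTheory GRing.Theory Num.Theory.
Import numFieldNormedType.Exports.
Local Open Scope classical_set_scope.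
Local Open Scope ring_scope.

Lemma CSw (R : realType) n (xi u w : 'I_n -> R) : (forall j, 0 <= xi j) ->
  (\sum_j xi j * u j * w j) ^+ 2 <= (\sum_j xi j * u j ^+ 2) * (\sum_j xi j * w j ^+ 2).
Proof.
move=> xi0.
set A := \sum_j xi j * u j ^+ 2; set B := \sum_j xi j * w j ^+ 2; set C := \sum_j xi j * u j * w j.
have A0 : 0 <= A by apply: sumr_ge0 => j _; apply: mulr_ge0 => //; exact: sqr_ge0.
have H : 0 <= \sum_j xi j * (A * w j - C * u j) ^+ 2.
  by apply: sumr_ge0 => j _; apply: mulr_ge0 => //; exact: sqr_ge0.
have E : \sum_j xi j * (A * w j - C * u j) ^+ 2 = A * (A * B - C ^+ 2).
  rewrite (eq_bigr (fun j => A^+2 * (xi j * w j ^+ 2) - (2 * A * C) * (xi j * u j * w j) + C^+2 * (xi j * u j ^+ 2))); last by move=> j _; ring.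
  rewrite big_split /= sumrB -!mulr_sumr -/A -/B -/C; ring.
rewrite E in H.
have [A00|Apos] := eqVneq A 0.
  have u0 : forall j, xi j * u j = 0.
    move=> j; have := A00; rewrite /A => /eqP; rewrite psumr_eq0; last first.
      by move=> i _; apply: mulr_ge0 => //; exact: sqr_ge0.
    move=> /allP /(_ j (mem_index_enum _)) /= /eqP.
    by move/eqP; rewrite mulf_eq0 expf_eq0 /= => /orP [/eqP ->|/eqP ->]; rewrite ?mul0r ?mulr0.
  have -> : C = 0 by rewrite /C big1 // => j _; rewrite u0 mul0r.
  rewrite expr0n /= mulr0n; apply: mulr_ge0 => //; apply: sumr_ge0 => j _; apply: mulr_ge0 => //; exact: sqr_ge0.
have Ap : 0 < A by rewrite lt_def Apos A0.
by rewrite -subr_ge0 -(pmulr_rge0 _ Ap).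
Qed.

Lemma jensen (R : realType) n (P u : 'I_n -> R) : (forall j, 0 <= P j) -> \sum_j P j = 1 ->
  (\sum_j P j * u j) ^+ 2 <= \sum_j P j * u j ^+ 2.
Proof.
move=> P0 P1.
set m := \sum_j P j * u j.
have H : 0 <= \sum_j P j * (u j - m) ^+ 2 by apply: sumr_ge0 => j _; apply: mulr_ge0 => //; exact: sqr_ge0.
have E : \sum_j P j * (u j - m) ^+ 2 = \sum_j P j * u j ^+ 2 - m ^+ 2.
  rewrite (eq_bigr (fun j => P j * u j ^+ 2 - (2 * m) * (P j * u j) + m ^+ 2 * P j)); last by move=> j _; ring.
  rewrite big_split /= sumrB -!mulr_sumr P1 -/m; ring.
by rewrite -subr_ge0 -E.
Qed.
Lemma term (R : realType) (x m z : R) : 0 < m -> m <= x -> x * (z / x) ^+ 2 <= x * z ^+ 2 / m ^+ 2.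
Proof.
move=> m0 mx.
have x0 : 0 < x by apply: lt_le_trans mx.
have -> : x * (z / x) ^+ 2 = z ^+ 2 / x by field; rewrite gt_eqF.
rewrite ler_pdivrMr // mulrAC ler_pdivlMr ?exprn_gt0 //.
have : m ^+ 2 <= x ^+ 2 by rewrite ler_pXn2r // ?nnegrE ltW.
have := sqr_ge0 z. nra.
Qed.

Lemma xinorm_ge0 (R : realType) n (xi z : 'cV[R]_n) : 0 <= xinorm xi z.
Proof. exact: sqrtr_ge0. Qed.

Lemma xinorm_sqr (R : realType) n (xi z : 'cV[R]_n) : (forall j, 0 <= xi j 0) ->
  xinorm xi z ^+ 2 = \sum_j xi j 0 * z j 0 ^+ 2.
Proof.
move=> h; rewrite sqr_sqrtr //; apply: sumr_ge0 => j _; apply: mulr_ge0 => //; exact: sqr_ge0.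
Qed.

Lemma dot_bound (R : realType) n (xi z w : 'cV[R]_n) (m : R) : 0 < m -> (forall j, m <= xi j 0) ->
  `|dotv z w| <= xinorm xi z * xinorm xi w / m.
Proof.
move=> m0 mx.
have x0 : forall j, 0 < xi j 0 by move=> j; apply: lt_le_trans (mx j).
have x0' : forall j, 0 <= xi j 0 by move=> j; apply: ltW.
have E : dotv z w = \sum_j xi j 0 * (z j 0 / xi j 0) * w j 0.
  by apply: eq_bigr => j _; field; rewrite gt_eqF.
have H1 := @CSw _ _ (fun j => xi j 0) (fun j => z j 0 / xi j 0) (fun j => w j 0) x0'.
have H2 : \sum_j xi j 0 * (z j 0 / xi j 0) ^+ 2 <= xinorm xi z ^+ 2 / m ^+ 2.
  rewrite xinorm_sqr // mulr_suml; apply: ler_sum => j _; exact: term.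
have H3 : dotv z w ^+ 2 <= (xinorm xi z * xinorm xi w / m) ^+ 2.
  rewrite E; apply: (le_trans H1).
  rewrite -(@xinorm_sqr _ _ xi w) // (_ : (_ / m) ^+ 2 = xinorm xi z ^+ 2 / m ^+ 2 * xinorm xi w ^+ 2); last first.
    by field; rewrite gt_eqF.
  by apply: ler_wpM2r => //; exact: sqr_ge0.
rewrite -sqrtr_sqr -(ger0_norm (_ : 0 <= xinorm xi z * xinorm xi w / m)); last first.
  by apply: divr_ge0; [apply: mulr_ge0; exact: xinorm_ge0 | exact: ltW].
by rewrite -sqrtr_sqr; apply: ler_wsqrtr.
Qed.
Lemma ximin_pos (R : realType) n (xi : 'cV[R]_n) (i0 : 'I_n) : (forall j, 0 < xi j 0) ->
  0 < ximin xi /\ forall j, ximin xi <= xi j 0.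
Proof.
move=> x0.
have ne : [set xi i 0 | i in [set: 'I_n]] !=set0 by exists (xi i0 0), i0.
have lb : has_lbound [set xi i 0 | i in [set: 'I_n]].
  by exists 0 => _ [j _ <-]; apply: ltW.
split; last first.
  by move=> j; apply: ge_inf => //; exists j.
case: (arg_minP (fun j => xi j 0) (isT : predT i0)) => j0 _ hmin.
apply: (lt_le_trans (x0 j0)); apply: lb_le_inf => // _ [j _ <-]; exact: hmin.
Qed.

Lemma L1 (R : realType) n (S : set 'cV[R]_n) : compact S -> exists M : R, forall y, S y -> forall j, `|y j 0| <= M.
Proof.
move=> /compact_bounded [M [_ HM]].
exists (M+1) => y Sy j.
have /= := HM (M+1) ltac:(by rewrite ltrDl) y Sy.
apply: le_trans.
have -> : `|y| = mx_norm y by [].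
rewrite mx_normrE.
exact: (le_bigmax 0 (fun ij : 'I_n * 'I_1 => `|y ij.1 ij.2|) (j, 0)).
Qed.

Lemma L2 (R : realType) (T : Type) (S : set T) (f g : T -> R) (K : R) :
  S !=set0 -> has_ubound (f @` S) -> has_ubound (g @` S) ->
  (forall s, S s -> f s <= g s + K) -> sup (f @` S) <= sup (g @` S) + K.
Proof.
move=> [s0 Ss0] _ hg H.
apply: ge_sup; first by exists (f s0), s0.
move=> _ [s Ss <-].
apply: (le_trans (H s Ss)); rewrite lerD2r.
apply: ub_le_sup => //; by exists s.
Qed.

Lemma dotvD (R : realType) n (a b w : 'cV[R]_n) : dotv (a + b) w = dotv a w + dotv b w.
Proof. by rewrite /dotv -big_split; apply: eq_bigr => j _; rewrite !mxE mulrDl. Qed.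

Lemma dotvB (R : realType) n (s v v' : 'cV[R]_n) : dotv s (v - v') = dotv s v - dotv s v'.
Proof. by rewrite /dotv -sumrB; apply: eq_bigr => j _; rewrite !mxE mulrBr. Qed.

Section Key.
Variables (R : realType) (n : nat) (A : finType).
Variables (p : 'I_n -> A -> 'cV[R]_n) (U Uhat : 'I_n -> A -> set 'cV[R]_n).
Variables (Pexp : 'M[R]_n) (xi : 'cV[R]_n) (alpha vt : R) (i : 'I_n) (a : A).
Hypothesis vt0 : 0 < vt.
Hypothesis xi0 : forall j, 0 < xi j 0.
Hypothesis hU : U i a !=set0.
Hypothesis hsim : [set p i a + x | x in U i a] `<=` simplex.
Hypothesis hUh1 : Uhat i a !=set0.
Hypothesis hUh2 : compact (Uhat i a).
Hypothesis hP : forall j q, [set p i a + x | x in U i a] q -> vt * q j 0 <= alpha * Pexp i j.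

Let m := ximin xi.
Let Iy y := inf [set xinorm xi (y - x) | x in U i a].
Let T := [set Iy y | y in Uhat i a].

Lemma hinf y : has_inf [set xinorm xi (y - x) | x in U i a].
Proof.
split; first by case: hU => x Ux; exists (xinorm xi (y - x)), x.
by exists 0 => _ [x _ <-]; exact: xinorm_ge0.
Qed.

Lemma hsupT : has_sup T.
Proof.
split; first by case: hUh1 => y Uy; exists (Iy y), y.
case: (@L1 _ _ _ hUh2) => M HM; case: hU => x0 Ux0.
exists (Num.sqrt (\sum_j xi j 0 * (M + `|x0 j 0|) ^+ 2)) => _ [y Uy <-].
apply: (@le_trans _ _ (xinorm xi (y - x0))).
  by apply: ge_inf; [exact: (hinf _).2 | exists x0].
apply: ler_wsqrtr; apply: ler_sum => j _; apply: ler_wpM2l; first exact: ltW.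
rewrite !mxE.
have h1 : `|y j 0 - x0 j 0| <= M + `|x0 j 0|.
  apply: (le_trans (ler_normB _ _)); rewrite lerD2r; exact: HM.
rewrite -[X in X <= _]real_normK ?num_real //.
rewrite ler_pXn2r // ?nnegrE //; apply: (le_trans _ h1); exact: normr_ge0.
Qed.

Lemma beta_ge0 : 0 <= beta_ia xi U Uhat i a.
Proof.
have [m0 _] := @ximin_pos _ _ xi i xi0.
rewrite /beta_ia; apply: divr_ge0; last exact: ltW.
case: hUh1 => y Uy.
apply: (@le_trans _ _ (Iy y)).
  apply: lb_le_inf; first by case: hU => x Ux; exists (xinorm xi (y - x)), x.
  by move=> _ [x _ <-]; exact: xinorm_ge0.
apply: ub_le_sup; first by case: hsupT.
by exists y.
Qed.

Lemma key (w s : 'cV[R]_n) : proxy_set p Uhat i a s ->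
  vt * `|dotv s w| <= alpha * \sum_j Pexp i j * `|w j 0| + vt * beta_ia xi U Uhat i a * xinorm xi w.
Proof.
move=> [y Uy <-].
have [m0 mle] := @ximin_pos _ _ xi i xi0.
have IyB : Iy y <= beta_ia xi U Uhat i a * m.
  rewrite /beta_ia mulfVK ?gt_eqF //.
  apply: ub_le_sup; first by case: hsupT.
  by exists y.
apply/ler_addgt0Pr => e e0.
set C := vt * xinorm xi w / m.
have C0 : 0 <= C by apply: divr_ge0; [apply: mulr_ge0; [exact: ltW|exact: xinorm_ge0]|exact: ltW].
set d := e / (C + 1).
have d0 : 0 < d by apply: divr_gt0 => //; apply: ltr_wpDl.
have [_ [x Ux <-] hx] := inf_adherent d0 (hinf y).
have -> : p i a + y = (p i a + x) + (y - x) by rewrite -addrA [x + _]addrC subrK.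
rewrite dotvD.
have b1 : vt * `|dotv (p i a + x) w| <= alpha * \sum_j Pexp i j * `|w j 0|.
  have [qge _] : simplex (p i a + x) by apply: hsim; exists x.
  rewrite mulr_sumr /dotv; apply: (le_trans (ler_wpM2l (ltW vt0) (ler_norm_sum _ _ _))).
  rewrite mulr_sumr; apply: ler_sum => j _.
  rewrite normrM (ger0_norm (qge j)) mulrA mulrA; apply: ler_wpM2r; first exact: normr_ge0.
  by apply: hP; exists x.
have b2 : `|dotv (y - x) w| <= (beta_ia xi U Uhat i a * m + d) * xinorm xi w / m.
  apply: (le_trans (@dot_bound _ _ xi (y - x) w _ m0 mle)).
  apply: ler_wpM2r; first by rewrite invr_ge0 ltW.
  apply: ler_wpM2r; first exact: xinorm_ge0.
  by apply: ltW; apply: (lt_le_trans hx); rewrite lerD2r.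
have dC : d * C <= e.
  rewrite /d mulrAC ler_pdivrMr; last by apply: ltr_wpDl.
  by rewrite ler_pM2l // lerDl.
have E : vt * ((beta_ia xi U Uhat i a * m + d) * xinorm xi w / m)
   = vt * beta_ia xi U Uhat i a * xinorm xi w + d * C.
  by rewrite /C; field; rewrite gt_eqF.
apply: (le_trans (ler_wpM2l (ltW vt0) (ler_normD _ _))).
rewrite mulrDr.
apply: (le_trans (lerD b1 (ler_wpM2l (ltW vt0) b2))).
by rewrite E -addrA lerD2l lerD2l.
Qed.

Lemma comp (v v' : 'cV[R]_n) :
  `|vt * (supp_fun (proxy_set p Uhat i a) v - supp_fun (proxy_set p Uhat i a) v')|
  <= alpha * \sum_j Pexp i j * `|(v - v') j 0| + vt * beta_ia xi U Uhat i a * xinorm xi (v - v').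
Proof.
set S := proxy_set p Uhat i a.
set K := (alpha * \sum_j Pexp i j * `|(v - v') j 0| + vt * beta_ia xi U Uhat i a * xinorm xi (v - v')) / vt.
have hK : forall s, S s -> `|dotv s (v - v')| <= K.
  by move=> s Ss; rewrite /K ler_pdivlMr // mulrC; apply: key.
have ne : S !=set0 by case: hUh1 => y Uy; exists (p i a + y), y.
have ub : forall u, has_ubound ((fun s => dotv s u) @` S).
  move=> u; exists ((alpha * \sum_j Pexp i j * `|u j 0| + vt * beta_ia xi U Uhat i a * xinorm xi u) / vt).
  move=> _ [s Ss <-]; rewrite ler_pdivlMr // mulrC.
  apply: (le_trans _ (key u s Ss)); rewrite ler_pM2l //; exact: ler_norm.
have h1 : supp_fun S v <= supp_fun S v' + K.
  apply: L2 => // s Ss; rewrite -lerBlDl -dotvB.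
  exact: le_trans (ler_norm _) (hK s Ss).
have h2 : supp_fun S v' <= supp_fun S v + K.
  apply: L2 => // s Ss; rewrite -lerBlDl.
  apply: (le_trans _ (hK s Ss)); rewrite dotvB -normrN opprB; exact: ler_norm.
rewrite normrM (gtr0_norm vt0) -ler_pdivlMl // mulrC -/K ler_norml.
by rewrite lerBlDl h1 andbT lerNl opprB lerBlDl.
Qed.
End Key.

Lemma sq_le (R : realType) (x y : R) : `|x| <= y -> x ^+ 2 <= y ^+ 2.
Proof.
move=> h; have h0 := normr_ge0 x.
have e : x ^+ 2 = `|x| ^+ 2 by rewrite real_normK ?num_real.
rewrite e; nra.
Qed.

Theorem theorem4 (R : realType) (n d : nat) (A : finType)
  (c : 'I_n -> A -> R) (vt : R) (pi : 'I_n -> A)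
  (p : 'I_n -> A -> 'cV[R]_n) (U Uhat : 'I_n -> A -> set 'cV[R]_n)
  (Pexp : 'M[R]_n) (xi : 'cV[R]_n) (Phi : 'M[R]_(n, d)) (alpha : R) :
  0 < vt < 1 ->
  (forall i a, simplex (p i a)) ->
  (forall i a, U i a !=set0 /\ compact (U i a)) ->
  (forall i a, [set p i a + x | x in U i a] `<=` simplex) ->
  (forall i a, Uhat i a !=set0 /\ compact (Uhat i a) /\ U i a `<=` Uhat i a) ->
  stochastic Pexp -> stationary Pexp xi -> (forall i, 0 < xi i 0) ->
  0 < alpha < 1 ->
  (forall i j a q, [set p i a + x | x in U i a] q -> vt * q j 0 <= alpha * Pexp i j) ->
  alpha ^+ 2 + vt ^+ 2 * (beta xi U Uhat pi) ^+ 2 < 2^-1 ->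
  (forall theta theta' : 'cV[R]_d,
     xinorm xi (proxy_bellman c vt pi p Uhat (Phi *m theta)
                - proxy_bellman c vt pi p Uhat (Phi *m theta')) ^+ 2
     <= 2 * (alpha ^+ 2 + vt ^+ 2 * (beta xi U Uhat pi) ^+ 2)
          * xinorm xi (Phi *m theta - Phi *m theta') ^+ 2
   /\ (Phi *m theta != Phi *m theta' ->
       2 * (alpha ^+ 2 + vt ^+ 2 * (beta xi U Uhat pi) ^+ 2)
          * xinorm xi (Phi *m theta - Phi *m theta') ^+ 2
       < xinorm xi (Phi *m theta - Phi *m theta') ^+ 2))
  /\ ((forall i, beta_ia xi U Uhat i (pi i) = 0) ->
      forall theta theta' : 'cV[R]_d,
        xinorm xi (proxy_bellman c vt pi p Uhat (Phi *m theta)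
                   - proxy_bellman c vt pi p Uhat (Phi *m theta'))
        <= alpha * xinorm xi (Phi *m theta - Phi *m theta')).
Proof.
move=> /andP[vt0 vt1] hp hU hsim hUh [P0 P1] [[_ xi1] hstat] xi0 /andP[a0 a1] hP hlt.
have xi0' : forall j, 0 <= xi j 0 by move=> j; exact: ltW.
set b := beta xi U Uhat pi.
set T := proxy_bellman c vt pi p Uhat.
have hcomp : forall (v v' : 'cV[R]_n) i,
    `|(T v - T v') i 0| <= alpha * \sum_j Pexp i j * `|(v - v') j 0|
       + vt * beta_ia xi U Uhat i (pi i) * xinorm xi (v - v').
  move=> v v' i.
  have -> : (T v - T v') i 0 = vt * (supp_fun (proxy_set p Uhat i (pi i)) v - supp_fun (proxy_set p Uhat i (pi i)) v').
    by rewrite /T /proxy_bellman !mxE; ring.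
  apply: comp => //.
  - exact: (hU i (pi i)).1.
  - exact: (hUh i (pi i)).1.
  - exact: (hUh i (pi i)).2.1.
  - by move=> j q; apply: hP.
have bi0 : forall i, 0 <= beta_ia xi U Uhat i (pi i).
  move=> i; apply: beta_ge0 => //.
  - exact: (hU i (pi i)).1.
  - exact: (hUh i (pi i)).1.
  - exact: (hUh i (pi i)).2.1.
have bib : forall i, beta_ia xi U Uhat i (pi i) <= b.
  move=> i; exact: (le_bigmax 0 (fun i => beta_ia xi U Uhat i (pi i)) i).
have b0 : 0 <= b.
  rewrite /b /beta; elim/big_ind: _ => // x y hx hy; rewrite le_max hx //.
have hjen : forall (w : 'cV[R]_n),
    \sum_i xi i 0 * (alpha * \sum_j Pexp i j * `|w j 0|) ^+ 2 <= alpha ^+ 2 * \sum_j xi j 0 * w j 0 ^+ 2.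
  move=> w.
  apply: (@le_trans _ _ (\sum_i xi i 0 * (alpha ^+ 2 * \sum_j Pexp i j * w j 0 ^+ 2))).
    apply: ler_sum => i _; apply: ler_wpM2l => //; rewrite exprMn; apply: ler_wpM2l; first exact: sqr_ge0.
    have := @jensen _ _ (fun j => Pexp i j) (fun j => `|w j 0|) (P0 i) (P1 i).
    suff -> : \sum_j Pexp i j * w j 0 ^+ 2 = \sum_j Pexp i j * `|w j 0| ^+ 2 by [].
    by apply: eq_bigr => j _; rewrite real_normK ?num_real.
  under eq_bigr => i _ do rewrite mulrCA mulr_sumr.
  rewrite -mulr_sumr exchange_big /=; apply: ler_wpM2l; first exact: sqr_ge0.
  rewrite le_eqVlt; apply/orP; left; apply/eqP.
  apply: eq_bigr => j _; rewrite -hstat mulr_suml; apply: eq_bigr => i _; ring.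
have hsum : forall (v v' : 'cV[R]_n) (bb : R), 0 <= bb ->
    (forall i, beta_ia xi U Uhat i (pi i) <= bb) ->
    \sum_i xi i 0 * (T v - T v') i 0 ^+ 2
      <= 2 * (alpha ^+ 2 + vt ^+ 2 * bb ^+ 2) * \sum_j xi j 0 * (v - v') j 0 ^+ 2.
  move=> v v' bb bb0 hbb.
  set N := \sum_j xi j 0 * (v - v') j 0 ^+ 2.
  have hN : xinorm xi (v - v') ^+ 2 = N by rewrite xinorm_sqr.
  set a := fun i => alpha * \sum_j Pexp i j * `|(v - v') j 0|.
  apply: (@le_trans _ _ (\sum_i xi i 0 * (2 * a i ^+ 2 + 2 * (vt ^+ 2 * bb ^+ 2 * N)))).
    apply: ler_sum => i _; apply: ler_wpM2l => //.
    have h : `|(T v - T v') i 0| <= a i + vt * bb * xinorm xi (v - v').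
      apply: (le_trans (hcomp v v' i)); rewrite lerD2l; apply: ler_wpM2r; first exact: xinorm_ge0.
      by apply: ler_wpM2l; [exact: ltW | exact: hbb].
    apply: (le_trans (@sq_le _ _ _ h)).
    rewrite -hN.
    set B := vt * bb * xinorm xi (v - v').
    have -> : vt ^+ 2 * bb ^+ 2 * xinorm xi (v - v') ^+ 2 = B ^+ 2 by rewrite /B; ring.
    have := sqr_ge0 (a i - B); nra.
  under eq_bigr => i _ do rewrite mulrDr.
  rewrite big_split /= -mulr_suml xi1 mul1r.
  rewrite (eq_bigr (fun i => 2 * (xi i 0 * a i ^+ 2))); last by move=> i _; ring.
  rewrite -mulr_sumr.
  have := hjen (v - v'); rewrite -/N => hj.
  have e : 2 * (alpha ^+ 2 + vt ^+ 2 * bb ^+ 2) * N = 2 * (alpha ^+ 2 * N) + 2 * (vt ^+ 2 * bb ^+ 2 * N) by ring.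
  rewrite e lerD2r; apply: ler_wpM2l => //.
split.
  move=> th th'.
  have H := hsum (Phi *m th) (Phi *m th') b b0 bib.
  rewrite !xinorm_sqr //; split => // neq.
  set N := \sum_j xi j 0 * (Phi *m th - Phi *m th') j 0 ^+ 2.
  have N0 : 0 <= N by apply: sumr_ge0 => j _; apply: mulr_ge0 => //; exact: sqr_ge0.
  have Npos : 0 < N.
    rewrite lt_def N0 andbT; apply/negP => /eqP /eqP; rewrite psumr_eq0; last first.
      by move=> j _; apply: mulr_ge0 => //; exact: sqr_ge0.
    move=> /allP hall; move: neq; rewrite -subr_eq0 => /negP; apply; apply/eqP/matrixP => j k.
    rewrite ord1 [RHS]mxE; have /= := hall j (mem_index_enum _).
    by rewrite mulf_eq0 sqrf_eq0 (gt_eqF (xi0 j)) /= => /eqP.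
  have h2 : 2 * (alpha ^+ 2 + vt ^+ 2 * b ^+ 2) < 1.
    move: hlt; set X := alpha ^+ 2 + vt ^+ 2 * b ^+ 2; lra.
  by rewrite -[X in _ < X]mul1r ltr_pM2r.
move=> hb0 th th'.
set v := Phi *m th; set v' := Phi *m th'.
have H : \sum_i xi i 0 * (T v - T v') i 0 ^+ 2 <= alpha ^+ 2 * \sum_j xi j 0 * (v - v') j 0 ^+ 2.
  apply: le_trans (hjen (v - v')).
  apply: ler_sum => i _; apply: ler_wpM2l => //; apply: sq_le.
  by have := hcomp v v' i; rewrite hb0 mulr0 mul0r addr0.
rewrite /xinorm -(ger0_norm (ltW a0)) -sqrtr_sqr -sqrtrM ?sqr_ge0 //.
exact: ler_wsqrtr.
Qed.
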